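(* Assume case (i) as in the context, and let $t_0(y)=f(Ay)\vee f(1+2/A)$ for a fixed $A>3\vee(B-1)$. Then, uniformly in $h>0$ and $y>g(h)$, \[ \int_{t_0(y)}^\infty\big(\bar\Pi(g(s+h)-y)-\bar\Pi(g(s))\big)ds\lesssim y\,f'(y)\,\bar\Pi(y). \]
   Context: $\Pi$ is the Lévy measure of a subordinator, $\bar\Pi(x)=\Pi((x,\infty))$. $f:[0,\infty)\to(0,\infty)$ is increasing with $f(0)\in(0,1)$, $f(t)\to\infty$, and $g=f^{-1}$ extended by $g(x)=0$ on $[0,f(0))$. $a\lesssim b$ means $a\le Cb$ for a constant $C\in(0,\infty)$. Case (i): $\bar\Pi$ regularly varying at $\infty$ (i.e. $\bar\Pi(\lambda t)/\bar\Pi(t)\to\lambda^{-\alpha}$ for all $\lambda>0$) with index $-\alpha\in(-1,0)$, $\bar\Pi(x)=x^{-\alpha}L(x)$ with $L$ slowly varying, and there exist $B,N>0$ such that $x\mapsto x^NL(x)$ is non-decreasing on $(B,\infty)$; $f$ is differentiable, $tf'(t)\bar\Pi(t)$ decreases to $0$, $g(t+\varepsilon)/g(t)\to1$ for all $\varepsilon>0$, and $t\bar\Pi(g(t)/\log(t)^\beta)\to0$ for some $\beta>(1+2\alpha)/(2\alpha+\alpha^2)$. *)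

(* Defs.v *)
From HB Require Import structures.
From mathcomp Require Import all_boot all_order all_algebra.
From mathcomp Require Import all_classical all_reals all_analysis.
Set Implicit Arguments. Unset Strict Implicit. Unset Printing Implicit Defensive.
Import Order.TTheory GRing.Theory Num.Theory.
Import numFieldNormedType.Exports.
Local Open Scope classical_set_scope.
Local Open Scope ring_scope.

Definition levy_measure_subordinator (R : realType)
  (Pi : {measure set R -> \bar R}) : Prop :=
  Pi [set x : R | x <= 0] = 0%E /\
  (\int[Pi]_(x in [set x : R | (0 < x)%R]) (Num.min 1%R x)%:E < +oo)%E.

(* tail function  Pibar x = Pi((x, oo)) (finite for x > 0 under the Levy condition) *)
Definition Pibar (R : realType) (Pi : {measure set R -> \bar R}) (x : R) : R :=
  fine (Pi [set y : R | x < y]).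

Definition regularly_varying_index (R : realType) (F : R -> R) (alpha : R) : Prop :=
  forall lam : R, 0 < lam ->
    (fun t => F (lam * t) / F t) @ +oo --> lam `^ (- alpha).

(* Main.v *)
Require Import Defs.
From HB Require Import structures.
From mathcomp Require Import all_boot all_order all_algebra.
From mathcomp Require Import all_classical all_reals all_analysis.
From mathcomp Require Import lra ring measurable_realfun.
Import Order.TTheory GRing.Theory Num.Theory.
Import numFieldNormedType.Exports.
Local Open Scope classical_set_scope.
Local Open Scope ring_scope.
Lemma tele2 (R : realType) (w : nat -> R) n :
  \sum_(j < n) (w j - w j.+2) = w 0%N + w 1%N - w n - w n.+1.
Proof.
elim: n => [|n IH]; first by rewrite big_ord0; lra.
rewrite big_ord_recr /= IH; lra.
Qed.

Lemma tele1 (R : realType) (w : nat -> R) n :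
  \sum_(j < n) (w j - w j.+1) = w 0%N - w n.
Proof.
elim: n => [|n IH]; first by rewrite big_ord0; lra.
rewrite big_ord_recr /= IH; lra.
Qed.

Lemma pow_lin (R : realType) (z : R) n : 0 <= z <= 1 ->
  (1 + z) ^+ n <= 1 + z * (n%:R * 2 ^+ n).
Proof.
move=> /andP[z0 z1]; elim: n => [|n IH]; first by rewrite expr0 mul0r mulr0 addr0.
have p1 : 1 <= (2:R) ^+ n by apply: exprn_ege1; lra.
have m0 : 0 <= (n%:R : R) by [].
rewrite exprS exprS -natr1.
have h1 : (1 + z) * (1 + z) ^+ n <= (1 + z) * (1 + z * (n%:R * 2 ^+ n)).
  by rewrite ler_wpM2l //; lra.
apply: (le_trans h1).
set p := (2:R) ^+ n in p1 *; set m := (n%:R : R) in m0 *.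
have mp0 : 0 <= m * p by apply: mulr_ge0 => //; lra.
have e1 : z * z * (m * p) <= z * (m * p) by apply: ler_wpM2r => //; nra.
have e2 : z <= 2 * z * p by nra.
nra.
Qed.

Local Open Scope ereal_scope.
Lemma le_int_nomeas d (T : measurableType d) (R : realType) (mu : {measure set T -> \bar R})
  (D : set T) (f1 f2 : T -> \bar R) :
  (forall x, D x -> 0 <= f1 x) -> (forall x, D x -> f1 x <= f2 x) ->
  \int[mu]_(x in D) f1 x <= \int[mu]_(x in D) f2 x.
Proof.
move=> f10 f12.
have f20 : forall x, D x -> 0 <= f2 x by move=> x Dx; exact: le_trans (f10 x Dx) (f12 x Dx).
rewrite (ge0_integralE mu f10) (ge0_integralE mu f20) /=.
apply: ereal_sup_le => _ [h hle <-]; exists h => //= x.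
apply: le_trans (hle x) _.
rewrite /patch; case: ifP => // /[1!inE] Dx; exact: f12.
Qed.

Lemma int_le_pos d (T : measurableType d) (R : realType) (mu : {measure set T -> \bar R})
  (D : set T) (f : T -> \bar R) :
  \int[mu]_(x in D) f x <= \int[mu]_(x in D) f^\+ x.
Proof.
rewrite [X in X <= _]integralE.
rewrite -[leRHS]adde0 leeD // oppe_le0; apply: integral_ge0 => x _; exact: funeneg_ge0.
Qed.
Local Close Scope ereal_scope.

Lemma meas_gt (R : realType) (x : R) : measurable [set y : R | x < y].
Proof.
have -> : [set y : R | x < y] = `]x, +oo[%classic.
  by apply/seteqP; split => z /=; rewrite in_itv /= andbT.
exact: measurable_itv.
Qed.

Lemma Pi_fin (R : realType) (Pi : {measure set R -> \bar R}) :
  levy_measure_subordinator Pi -> (Pi [set y : R | (1 < y)%R] < +oo)%E.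
Proof.
move=> [_ hint].
have mD : measurable [set x : R | 0 < x] by exact: meas_gt.
have -> : Pi [set y : R | 1 < y] =
    (\int[Pi]_(x in [set x : R | (0 < x)%R]) (\1_[set y : R | (1 < y)%R] x)%:E)%E.
  rewrite integral_indic //; last exact: meas_gt.
  congr (Pi _); apply/seteqP; split => z /=; first by move=> h; split => //; lra.
  by case.
apply: le_lt_trans hint.
apply: le_int_nomeas => x /= x0; first by rewrite lee_fin.
rewrite lee_fin indicE; case: (boolP (x \in _)) => hx.
  rewrite inE /= in hx; rewrite /= le_min; apply/andP; split => //; exact: ltW.
by rewrite /= le_min; apply/andP; split => //; exact: ltW.
Qed.

Lemma P_ge0 (R : realType) (Pi : {measure set R -> \bar R}) x : 0 <= Pibar Pi x.
Proof. by apply: fine_ge0; exact: measure_ge0. Qed.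

Lemma P_mono (R : realType) (Pi : {measure set R -> \bar R}) (x x' : R) :
  levy_measure_subordinator Pi -> 1 <= x -> x <= x' -> Pibar Pi x' <= Pibar Pi x.
Proof.
move=> hL x1 xx.
have h1 := @Pi_fin R Pi hL.
have s1 : (Pi [set y : R | (x < y)%R] <= Pi [set y : R | (1 < y)%R])%E.
  apply: le_measure; rewrite ?inE; try exact: meas_gt.
  by move=> z /= hz; apply: le_lt_trans x1 hz.
have s2 : (Pi [set y : R | (x' < y)%R] <= Pi [set y : R | (x < y)%R])%E.
  apply: le_measure; rewrite ?inE; try exact: meas_gt.
  by move=> z /= hz; apply: le_lt_trans xx hz.
apply: fine_le => //; rewrite ge0_fin_numE //.
- exact: le_lt_trans (le_trans s2 s1) h1.
- exact: le_lt_trans s1 h1.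
Qed.

Lemma P_pos (R : realType) (Pi : {measure set R -> \bar R}) (alpha X : R) :
  levy_measure_subordinator Pi -> regularly_varying_index (Pibar Pi) alpha ->
  1 <= X -> 0 < Pibar Pi X.
Proof.
move=> hL hrv X1; rewrite lt_neqAle P_ge0 andbT; apply/negP => /eqP PX0.
have h2 := hrv 2 ltac:(lra).
have h0 : (fun t => Pibar Pi (2 * t) / Pibar Pi t) @ +oo --> (0:R).
  apply: cvg_near_cst; near=> t.
  have tX : X <= t by near: t; apply: nbhs_pinfty_ge; exact: num_real.
  have : Pibar Pi t = 0.
    apply/eqP; rewrite eq_le P_ge0 andbT PX0; exact: P_mono.
  by move=> ->; rewrite invr0 mulr0.
have e : 2 `^ (- alpha) = 0 :> R.
  have e1 := cvg_lim (@norm_hausdorff _ _) h2. have e2 := cvg_lim (@norm_hausdorff _ _) h0. by rewrite -e1 e2.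
have hp : 0 < 2 `^ (- alpha) :> R by apply: powR_gt0; lra.
by rewrite e ltxx in hp.
Unshelve. all: by end_near.
Qed.

Lemma T2 (R : realType) (P f df : R -> R) (y K v0 : R) :
  (forall x x', 1 <= x -> x <= x' -> P x' <= P x) ->
  (forall x, 0 <= P x) ->
  0 < y -> 1 <= v0 -> y <= v0 ->
  (forall p, v0 <= p -> exists xi, [/\ p < xi, xi < p + y & f (p + y) - f p = df xi * y]) ->
  (forall xi, y <= xi -> xi * df xi * P xi <= K) ->
  (forall p, v0 <= p -> f p <= f (p + y)) ->
  forall p, v0 <= p ->
  [/\ 0 <= K, 0 <= f (p + y) - f p & P (p + y) * (f (p + y) - f p) * p <= y * K].
Proof.
move=> hPm hP0 y0 v01 yv0 hmvt hdec hinc p vp.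
have [xi [pxi xip eD]] := hmvt p vp.
have hK := hdec xi ltac:(lra).
have D0 : 0 <= f (p + y) - f p by have := hinc p vp; lra.
have d0 : 0 <= df xi.
  rewrite eD in D0; rewrite leNgt; apply/negP => dn.
  have : df xi * y < 0 by rewrite pmulr_llt0.
  lra.
have Pxi := hP0 xi.
have Pm : P (p + y) <= P xi by apply: hPm; lra.
have K0 : 0 <= K.
  apply: le_trans hK; apply: mulr_ge0 => //; apply: mulr_ge0 => //; lra.
split => //.
rewrite eD.
have e1 : P (p + y) * (df xi * y) * p <= P xi * (df xi * y) * p.
  apply: ler_wpM2r; first lra.
  apply: ler_wpM2r => //; apply: mulr_ge0 => //; lra.
apply: le_trans e1 _.
have e2 : P xi * (df xi * y) * p <= P xi * (df xi * y) * xi.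
  apply: ler_wpM2l; last lra.
  apply: mulr_ge0 => //; apply: mulr_ge0 => //; lra.
apply: le_trans e2 _.
have -> : P xi * (df xi * y) * xi = y * (xi * df xi * P xi) by ring.
apply: ler_wpM2l; lra.
Qed.

Lemma T3 (R : realType) (P : R -> R) (y K B N alpha A c PX D u : R) (n0 : nat) :
  (forall x x', 1 <= x -> x <= x' -> P x' <= P x) ->
  (forall x, 0 <= P x) ->
  {in `]B, +oo[ &, forall x x', x <= x' ->
      x `^ N * (x `^ alpha * P x) <= x' `^ N * (x' `^ alpha * P x')} ->
  N + alpha <= n0%:R -> c = n0%:R * 2 ^+ n0 ->
  PX = P (2 * B + 1) -> 0 < PX -> 0 < B -> 3 < A -> 0 < y ->
  (A - 1) * y <= u -> 1 <= u -> 0 <= K -> 0 <= D ->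
  P (u + 2 * y) * D * (u + y) <= y * K ->
  (P u - P (u + 2 * y)) * D <=
    2 * c * y * K * (1 / u - 1 / (u + y)) + B / 2 * K / PX * (P u - P (u + 2 * y)).
Proof.
move=> hPm hP0 hQ hn ec ePX PX0 B0 A3 y0 hu u1 K0 D0 hD.
have c0 : 0 <= c by rewrite ec; apply: mulr_ge0 => //; apply: exprn_ge0.
have bnn : 0 <= P u - P (u + 2 * y) by have := hPm u (u + 2 * y) u1 ltac:(lra); lra.
have et : 1 / u - 1 / (u + y) = y / (u * (u + y)).
  by field; apply/andP; split; apply/eqP; lra.
have t1 : 0 <= 1 / u - 1 / (u + y).
  rewrite et; apply: divr_ge0; [lra|apply: mulr_ge0; lra].
have t2 : 0 <= B / 2 * K / PX * (P u - P (u + 2 * y)).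
  apply: mulr_ge0 => //; apply: divr_ge0; last lra; apply: mulr_ge0 => //; lra.
have Pw0 := hP0 (u + 2 * y).
have y2 : 2 * y <= u by nra.
have [uB|Bu] := leP u B.
  have PXw : PX <= P (u + 2 * y) by rewrite ePX; apply: hPm; lra.
  have DyK : PX * D <= y * K.
    apply: le_trans hD.
    have : PX * D <= P (u + 2 * y) * D by apply: ler_wpM2r.
    move/le_trans; apply.
    rewrite -[leLHS]mulr1; apply: ler_wpM2l; last lra.
    exact: mulr_ge0.
  have e : (P u - P (u + 2 * y)) * D <= B / 2 * K / PX * (P u - P (u + 2 * y)).
    rewrite mulrC; apply: ler_wpM2r => //.
    rewrite ler_pdivlMr // mulrC.
    apply: le_trans DyK _.
    apply: ler_wpM2r => //; lra.
  have : 0 <= 2 * c * y * K * (1 / u - 1 / (u + y)).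
    apply: mulr_ge0 => //; apply: mulr_ge0 => //; apply: mulr_ge0 => //; lra.
  lra.
pose z := 2 * y / u.
have u0 : 0 < u by lra.
have z0 : 0 <= z by apply: divr_ge0; lra.
have z1 : z <= 1 by rewrite /z ler_pdivrMr //; lra.
have ew : u + 2 * y = u * (1 + z) by rewrite /z; field; apply/eqP; lra.
have uB : u \in `]B, +oo[ by rewrite in_itv /= andbT.
have wB : u + 2 * y \in `]B, +oo[ by rewrite in_itv /= andbT; lra.
have hq := hQ u (u + 2 * y) uB wB ltac:(lra).
have E1 : (1 + z) `^ N * (1 + z) `^ alpha <= 1 + z * c.
  rewrite -powRD; last by apply/implyP => _; apply/eqP; lra.
  apply: le_trans (ler_powR _ hn) _; first lra.
  rewrite powR_mulrn; last lra.
  by rewrite ec; apply: pow_lin; lra.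
have U0 : 0 < u `^ N * u `^ alpha by apply: mulr_gt0; apply: powR_gt0.
set Pw := P (u + 2 * y) in hq hD bnn t2 Pw0 *.
rewrite [in X in _ <= X]ew !powRM in hq; try lra.
have hq2 : (u `^ N * u `^ alpha) * P u <= (u `^ N * u `^ alpha) * (((1 + z) `^ N * (1 + z) `^ alpha) * Pw).
  rewrite -mulrA; apply: le_trans hq _; rewrite le_eqVlt; apply/orP; left; apply/eqP; ring.
rewrite ler_pM2l // in hq2.
have hb : P u - Pw <= z * c * Pw.
  have : ((1 + z) `^ N * (1 + z) `^ alpha) * Pw <= (1 + z * c) * Pw by apply: ler_wpM2r.
  lra.
have hb2 : (P u - Pw) * D * (u + y) <= z * c * (y * K).
  apply: le_trans (_ : z * c * Pw * D * (u + y) <= _).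
    apply: ler_wpM2r; first lra.
    exact: ler_wpM2r.
  have -> : z * c * Pw * D * (u + y) = (z * c) * (Pw * D * (u + y)) by ring.
  by apply: ler_wpM2l => //; apply: mulr_ge0.
have hb3 : (P u - Pw) * D <= 2 * c * y * K * (1 / u - 1 / (u + y)).
  rewrite et.
  have -> : 2 * c * y * K * (y / (u * (u + y))) = z * c * (y * K) / (u + y).
    by rewrite /z; field; apply/andP; split; apply/eqP; lra.
  by rewrite ler_pdivlMr //; lra.
lra.
Qed.

Lemma sum_bound (R : realType) (P f df : R -> R) (y K B N alpha A v0 : R) (n0 : nat) :
  (forall x x', 1 <= x -> x <= x' -> P x' <= P x) ->
  (forall x, 0 <= P x) ->
  {in `]B, +oo[ &, forall x x', x <= x' ->
      x `^ N * (x `^ alpha * P x) <= x' `^ N * (x' `^ alpha * P x')} ->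
  N + alpha <= n0%:R -> 0 < P (2 * B + 1) -> 0 < B -> 3 < A -> 0 < y ->
  A * y <= v0 -> 1 + 2 / A <= v0 ->
  (forall p, v0 <= p -> exists xi, [/\ p < xi, xi < p + y & f (p + y) - f p = df xi * y]) ->
  (forall xi, y <= xi -> xi * df xi * P xi <= K) ->
  (forall p, v0 <= p -> f p <= f (p + y)) ->
  0 <= K /\
  forall n, \sum_(j < n) (P (v0 + (j%:R - 1) * y) - P (v0 + (j.+2%:R - 1) * y)) *
       (f (v0 + (j.+2%:R - 1) * y) - f (v0 + (j.+1%:R - 1) * y))
    <= (n0%:R * 2 ^+ n0 + B * P 1 / P (2 * B + 1) + 1) * K.
Proof.
move=> hPm hP0 hQ hn PX0 B0 A3 y0 Av0 v0A hmvt hdec hinc.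
pose a (j : nat) := v0 + (j%:R - 1) * y.
have ha1 j : a j.+1 = a j + y by rewrite /a -natr1; ring.
have ha2 j : a j.+2 = a j + 2 * y by rewrite ha1 ha1; ring.
have ya : y <= v0 / A by rewrite ler_pdivlMr; lra.
have a01 : 1 <= a 0%N.
  rewrite /a /= sub0r mulN1r.
  have r0 : 0 < 1 / A by apply: divr_gt0; lra.
  have r3 : 1 / A < 1 / 3 by rewrite ltr_pdivrMr; lra.
  have e1 : v0 / A = v0 * (1 / A) by rewrite mul1r.
  have e2 : 2 / A = 2 * (1 / A) by rewrite mulrA mulr1.
  rewrite e2 in v0A; rewrite e1 in ya.
  set r := 1 / A in r0 r3 e1 e2 v0A ya.
  have h1 : 0 <= (v0 - (1 + 2 * r)) * (1 - r) by apply: mulr_ge0; lra.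
  have h2 : 0 <= r * (1 - 2 * r) by apply: mulr_ge0; lra.
  nra.
have aj j : a 0%N <= a j by rewrite /a; have : (0:R) <= j%:R by []; nra.
have a0y : (A - 1) * y <= a 0%N by rewrite /a /= sub0r mulN1r; nra.
have vp j : v0 <= a j.+1 by rewrite /a -natr1 addrK; have : (0:R) <= j%:R by []; nra.
have yv0 : y <= v0 by nra.
have v01 : 1 <= v0 by move: a01; rewrite /a /= sub0r mulN1r; lra.
have [K0 _ _] := @T2 R P f df y K v0 hPm hP0 y0 v01 yv0 hmvt hdec hinc v0 (lexx v0).
split => // n.
pose c : R := n0%:R * 2 ^+ n0.
pose PX := P (2 * B + 1).
have term j : (P (a j) - P (a j.+2)) * (f (a j.+2) - f (a j.+1)) <=
    2 * c * y * K * (1 / a j - 1 / a j.+1) + B / 2 * K / PX * (P (a j) - P (a j.+2)).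
  have [_ D0 hD] := @T2 R P f df y K v0 hPm hP0 y0 v01 yv0 hmvt hdec hinc _ (vp j).
  rewrite -(ha1 j.+1) in D0 hD.
  have hD' : P (a j + 2 * y) * (f (a j.+2) - f (a j.+1)) * (a j + y) <= y * K.
    by rewrite -(ha2 j) -(ha1 j).
  have := @T3 R P y K B N alpha A c PX (f (a j.+2) - f (a j.+1)) (a j) n0 hPm hP0 hQ hn
    erefl erefl PX0 B0 A3 y0 (le_trans a0y (aj j)) (le_trans a01 (aj j)) K0 D0 hD'.
  by rewrite -ha2 -ha1.
have S : \sum_(j < n) (P (a j) - P (a j.+2)) * (f (a j.+2) - f (a j.+1)) <=
    \sum_(j < n) (2 * c * y * K * (1 / a j - 1 / a j.+1) + B / 2 * K / PX * (P (a j) - P (a j.+2))).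
  by apply: ler_sum => j _; exact: term.
apply: le_trans S _.
rewrite big_split /= -!mulr_sumr.
rewrite (@tele1 R (fun j => 1 / a j)) (@tele2 R (fun j => P (a j))).
have an0 : 0 <= 1 / a n by apply: divr_ge0; have := le_trans a01 (aj n); lra.
have Pa0 : P (a 0%N) <= P 1 by apply: hPm; lra.
have Pa1 : P (a 1%N) <= P 1 by apply: hPm; have := aj 1%N; lra.
have Pan := hP0 (a n). have Pan1 := hP0 (a n.+1).
have c0 : 0 <= c by apply: mulr_ge0 => //; apply: exprn_ge0.
have y2 : 2 * y <= a 0%N by nra.
have a0p : 0 < a 0%N by lra.
have f1 : 2 * c * y * K * (1 / a 0%N - 1 / a n) <= c * K.
  have : 2 * c * y * K * (1 / a 0%N - 1 / a n) <= 2 * c * y * K * (1 / a 0%N).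
    apply: ler_wpM2l; last lra.
    have -> : 2 * c * y * K = 2 * y * (c * K) by ring.
    by apply: mulr_ge0; [lra|apply: mulr_ge0].
  move/le_trans; apply.
  have -> : 2 * c * y * K * (1 / a 0%N) = (c * K) * (2 * y / a 0%N) by field; apply/eqP; lra.
  rewrite -[leRHS]mulr1; apply: ler_wpM2l; first exact: mulr_ge0.
  by rewrite ler_pdivrMr //; lra.
have q0 : 0 <= B / 2 * K / PX.
  apply: divr_ge0; last exact: ltW; apply: mulr_ge0 => //; lra.
have f2 : B / 2 * K / PX * (P (a 0%N) + P (a 1%N) - P (a n) - P (a n.+1)) <= B * P 1 / PX * K.
  have : B / 2 * K / PX * (P (a 0%N) + P (a 1%N) - P (a n) - P (a n.+1)) <= B / 2 * K / PX * (2 * P 1).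
    apply: ler_wpM2l => //; lra.
  move/le_trans; apply.
  have -> : B / 2 * K / PX * (2 * P 1) = B * P 1 / PX * K.
    by field; apply/eqP; rewrite /PX; lra.
  exact: lexx.
rewrite /c /PX in f1 f2 *.
lra.
Qed.

Local Open Scope ereal_scope.
Lemma int_step (R : realType) (s0 : R) (phi : R -> R) (b dl lo hi : nat -> R) (E : R) :
  let D := `[s0, +oo[%classic in let S := fun j => `[lo j, hi j[%classic in
  (forall j, (0 <= b j)%R) ->
  (forall j, lebesgue_measure (S j) <= (dl j)%:E) ->
  (forall s, D s -> exists j, S j s /\ (phi s <= b j)%R) ->
  (forall n, (\sum_(j < n) b j * dl j <= E)%R) ->
  \int[lebesgue_measure]_(s in D) (phi s)%:E <= E%:E.
Proof.
move=> D S b0 hdl hcov hsum.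
have mD : measurable D by exact: measurable_itv.
have mS j : measurable (S j) by exact: measurable_itv.
have dl0 j : (0 <= dl j)%R by rewrite -lee_fin; apply: le_trans (hdl j); exact: measure_ge0.
pose t j s := (b j)%:E * (\1_(S j) s)%:E.
have t0 j s : 0 <= t j s by apply: mule_ge0; rewrite lee_fin // indic_ge0.
have mt j : measurable_fun D (fun s => t j s).
  apply: emeasurable_funM; first exact: measurable_cst.
  by apply/measurable_EFinP; exact: measurable_indic.
apply: le_trans (@int_le_pos _ _ _ lebesgue_measure D (fun s => (phi s)%:E)) _.
apply: le_trans (@le_int_nomeas _ _ _ lebesgue_measure D _ (fun s => \sum_(j <oo) t j s) _ _) _.
- by move=> s _; exact: funepos_ge0.
- move=> s Ds; have [j [Sj hj]] := hcov s Ds.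
  rewrite funeposE ge_max; apply/andP; split; last first.
    by apply: nneseries_ge0 => n _ _; exact: t0.
  apply: le_trans (nneseries_lim_ge (m := 0%N) j.+1 (fun n _ _ => t0 n s)).
  rewrite big_nat_recr //= -[leLHS]add0e; apply: leeD.
    by apply: sume_ge0 => n _; exact: t0.
  by rewrite /t indicE mem_set // mule1 lee_fin.
rewrite integral_nneseries //.
have ti j : \int[lebesgue_measure]_(s in D) t j s <= ((b j * dl j)%R)%:E.
  rewrite /t ge0_integralZl_EFin //; last first.
    by apply/measurable_EFinP; apply: measurable_indic; exact: measurable_itv.
  rewrite integral_indic //; last by exact: measurable_itv.
  have -> : ((b j * dl j)%R)%:E = (b j)%:E * (dl j)%:E by [].
  apply: lee_pmul => //; first by rewrite lee_fin.
  apply: le_trans (hdl j); apply: le_measure; rewrite ?inE.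
  - by apply: measurableI; exact: measurable_itv.
  - exact: measurable_itv.
  - by move=> x [].
apply: le_trans (lee_nneseries (v := fun j => ((b j * dl j)%R)%:E) _ _) _.
- by move=> n _ _; apply: integral_ge0 => x _; exact: t0.
- by move=> n _; exact: ti.
apply: lime_le.
  by apply: is_cvg_nneseries => n _ _; rewrite lee_fin; exact: mulr_ge0.
apply: nearW => n; rewrite big_mkord sumEFin lee_fin; exact: hsum.
Qed.
Local Close Scope ereal_scope.


Lemma a0_ge1 (R : realType) (A y v0 : R) : 3 < A -> 0 < y -> A * y <= v0 -> 1 + 2 / A <= v0 ->
  1 <= v0 - y.
Proof.
move=> A3 y0 Av0 v0A.
have ya : y <= v0 / A by rewrite ler_pdivlMr; lra.
have r0 : 0 < 1 / A by apply: divr_gt0; lra.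
have r3 : 1 / A < 1 / 3 by rewrite ltr_pdivrMr; lra.
have e1 : v0 / A = v0 * (1 / A) by rewrite mul1r.
have e2 : 2 / A = 2 * (1 / A) by rewrite mulrA mulr1.
rewrite e2 in v0A; rewrite e1 in ya.
set r := 1 / A in r0 r3 e1 e2 v0A ya.
have h1 : 0 <= (v0 - (1 + 2 * r)) * (1 - r) by apply: mulr_ge0; lra.
have h2 : 0 <= r * (1 - 2 * r) by apply: mulr_ge0; lra.
nra.
Qed.

Theorem lemma3 (R : realType) (Pi : {measure set R -> \bar R})
  (alpha B N beta A : R) (f g : R -> R) :
  levy_measure_subordinator Pi ->
  (* case (i): regular variation of Pibar with index -alpha in (-1,0) *)
  0 < alpha < 1 ->
  regularly_varying_index (Pibar Pi) alpha ->
  (* L(x) = x^alpha Pibar(x);  x |-> x^N L(x) non-decreasing on (B, oo) *)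
  0 < B -> 0 < N ->
  {in `]B, +oo[ &, forall x y, x <= y ->
      x `^ N * (x `^ alpha * Pibar Pi x) <= y `^ N * (y `^ alpha * Pibar Pi y)} ->
  (* f : [0,oo) -> (0,oo) increasing, f(0) in (0,1), f(t) -> oo *)
  {in `[0, +oo[ &, forall s t, s < t -> f s < f t} ->
  0 < f 0 < 1 ->
  f @ +oo --> +oo ->
  (* g = f^{-1} on [f 0, oo), extended by 0 on [0, f 0) *)
  (forall x, 0 <= x < f 0 -> g x = 0) ->
  (forall x, f 0 <= x -> 0 <= g x /\ f (g x) = x) ->
  (* f differentiable *)
  (forall t, 0 < t -> derivable f t 1) ->
  (* t f'(t) Pibar(t) decreases to 0 *)
  {in `]0, +oo[ &, forall s t, s <= t ->
      t * derive1 f t * Pibar Pi t <= s * derive1 f s * Pibar Pi s} ->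
  (fun t => t * derive1 f t * Pibar Pi t) @ +oo --> (0:R) ->
  (* g(t + eps)/g(t) -> 1 *)
  (forall eps, 0 < eps -> (fun t => g (t + eps) / g t) @ +oo --> (1:R)) ->
  (* t Pibar(g(t)/log(t)^beta) -> 0 for some beta > (1+2 alpha)/(2 alpha + alpha^2) *)
  (1 + 2 * alpha) / (2 * alpha + alpha ^+ 2) < beta ->
  (fun t => t * Pibar Pi (g t / (ln t) `^ beta)) @ +oo --> (0:R) ->
  (* fixed A > 3 \/ (B - 1) *)
  Num.max 3 (B - 1) < A ->
  exists C : R, 0 < C /\
    forall h y : R, 0 < h -> g h < y ->
      (\int[lebesgue_measure]_(s in `[(Num.max (f (A * y)) (f (1 + 2 / A)))%R, +oo[)
          (Pibar Pi (g (s + h) - y) - Pibar Pi (g s))%:E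
        <= (C * (y * derive1 f y * Pibar Pi y))%:E)%E.

Proof.
move=> hL /andP[al0 al1] hrv B0 N0 hQ fmono /andP[f00 f01] finf g0 gf fder fdec flim
  gratio hbeta hln hA.
set P := Pibar Pi.
have hPm : forall x x', 1 <= x -> x <= x' -> P x' <= P x.
  by move=> x x' h1 h2; exact: (@P_mono R Pi x x' hL h1 h2).
have hP0 : forall x, 0 <= P x by move=> x; exact: (@P_ge0 R Pi x).
have PX0 : 0 < P (2 * B + 1) by apply: (@P_pos R Pi alpha); [exact: hL|exact: hrv|lra].
pose n0 := (Num.trunc (N + alpha)).+1.
have hn : N + alpha <= n0%:R by apply: ltW; exact: truncnS_gt.
have A3 : 3 < A by move: hA; rewrite gt_max => /andP[].
exists (n0%:R * 2 ^+ n0 + B * P 1 / P (2 * B + 1) + 1); split.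
  have c0 : 0 <= (n0%:R : R) * 2 ^+ n0 by apply: mulr_ge0 => //; exact: exprn_ge0.
  have c1 : 0 <= B * P 1 / P (2 * B + 1).
    by apply: divr_ge0; [apply: mulr_ge0; [lra|exact: hP0]|exact: ltW].
  lra.
move=> h y h0 hy.
have gh0 : 0 <= g h.
  have [hf|hf] := ltP h (f 0).
    by rewrite g0 //; apply/andP; split => //; exact: ltW.
  by have [] := gf h hf.
have y0 : 0 < y by lra.
have fle : forall s t, 0 <= s -> s <= t -> f s <= f t.
  move=> s t s0 st; have [e|lt] := eqVneq s t; first by rewrite e.
  apply: ltW; apply: fmono; rewrite ?in_itv /= ?andbT //; first lra.
  by rewrite lt_neqAle lt st.
have flt : forall s t, 0 <= s -> s < t -> f s < f t.
  by move=> s t s0 st; apply: fmono; rewrite ?in_itv /= ?andbT //; lra.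
have gfi : forall u, 0 <= u -> g (f u) = u.
  move=> u u0; have f0u : f 0 <= f u by exact: fle.
  have [g0' fg] := gf (f u) f0u.
  have [lt|gt|//] := ltgtP (g (f u)) u.
    by have := flt _ _ g0' lt; rewrite fg ltxx.
  by have := flt _ _ u0 gt; rewrite fg ltxx.
have gmono : forall s s', f 0 <= s -> s <= s' -> g s <= g s'.
  move=> s s' s0 ss'; rewrite leNgt; apply/negP => lt.
  have [g0s fs] := gf s s0. have [g0s' fs'] := gf s' ltac:(lra).
  by have := flt _ _ g0s' lt; rewrite fs fs'; lra.
pose v0 := Num.max (A * y) (1 + 2 / A).
have Av0 : A * y <= v0 by rewrite /v0 le_max lexx.
have v0A : 1 + 2 / A <= v0 by rewrite /v0 le_max lexx orbT.
have v00 : 0 < 1 + 2 / A.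
  have : 0 < 2 / A by rewrite divr_gt0 //; lra.
  lra.
have et0 : Num.max (f (A * y)) (f (1 + 2 / A)) = f v0.
  rewrite /v0; have [hle|hle] := leP (A * y) (1 + 2 / A).
    by rewrite !max_r //; apply: fle => //; apply: mulr_ge0; lra.
  by rewrite !max_l //; apply: fle; lra.
rewrite et0.
have a01 := @a0_ge1 R A y v0 A3 y0 Av0 v0A.
have hmvt : forall p, v0 <= p ->
    exists xi, [/\ p < xi, xi < p + y & f (p + y) - f p = derive1 f xi * y].
  move=> p vp.
  have hd : forall x, x \in `]p, p + y[ -> is_derive x 1 f (derive1 f x).
    move=> x; rewrite in_itv /= => /andP[x1 x2].
    rewrite derive1E; apply: derivableP; apply: fder; lra.
  have hc : {within `[p, p + y], continuous f}.
    apply: derivable_within_continuous => x; rewrite in_itv /= => /andP[x1 x2].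
    apply: fder; lra.
  have [xi xin e] := @MVT R f (derive1 f) p (p + y) ltac:(lra) hd hc.
  exists xi; move: xin; rewrite in_itv /= => /andP[x1 x2]; split => //.
  by rewrite e; congr (_ * _); ring.
have hdec : forall xi, y <= xi ->
    xi * derive1 f xi * P xi <= y * derive1 f y * P y.
  move=> xi yxi; apply: fdec => //; rewrite in_itv /= andbT; lra.
have hinc : forall p, v0 <= p -> f p <= f (p + y) by move=> p vp; apply: fle; lra.
have [K0 hsum] := @sum_bound R P f (derive1 f) y (y * derive1 f y * P y) B N alpha A v0 n0
  hPm hP0 hQ hn PX0 B0 A3 y0 Av0 v0A hmvt hdec hinc.
pose a (j : nat) := v0 + (j%:R - 1) * y.
have ea1 j : a j.+1 = v0 + j%:R * y by rewrite /a -natr1; ring.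
have ea2 j : a j.+2 = v0 + j%:R * y + y by rewrite /a -natr1 -natr1; ring.
have ea0 j : a j = v0 + j%:R * y - y by rewrite /a; ring.
have aj1 j : 1 <= a j by rewrite ea0; have : (0:R) <= j%:R by []; nra.
apply: (@int_step R (f v0) (fun s => P (g (s + h) - y) - P (g s))
  (fun j => P (a j) - P (a j.+2)) (fun j => f (a j.+2) - f (a j.+1))
  (fun j => f (a j.+1)) (fun j => f (a j.+2))).
- move=> j /=; have := hPm (a j) (a j.+2) (aj1 j); rewrite ea0 ea2; lra.
- move=> j /=; rewrite lebesgue_measure_itv /= lte_fin.
  have : f (a j.+1) <= f (a j.+2) by apply: fle; rewrite ?ea1 ?ea2; have := aj1 j.+1; rewrite ea1; lra.
  by case: ifP => _ //; rewrite lee_fin; lra.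
- move=> s /=; rewrite in_itv /= andbT => hs.
  have v0p : 0 <= v0 by lra.
  have f0s : f 0 <= s by apply: le_trans hs; exact: fle.
  have [gs0 fgs] := gf s f0s.
  have vv0 : v0 <= g s by rewrite -{1}(gfi v0 v0p); apply: gmono => //; exact: fle.
  pose q := (g s - v0) / y.
  have q0 : 0 <= q by apply: divr_ge0; lra.
  pose j := Num.trunc q.
  have hj1 : j%:R <= q by rewrite truncn_le.
  have hj2 : q < j.+1%:R by exact: truncnS_gt.
  rewrite /q ler_pdivlMr // in hj1.
  rewrite /q ltr_pdivrMr // -natr1 in hj2.
  exists j; split.
    rewrite /= in_itv /=; apply/andP; split.
      by rewrite -fgs; apply: fle; rewrite ea1 //; have : (0:R) <= j%:R by []; nra.
    by rewrite -{1}fgs; apply: flt => //; rewrite ea2; lra.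
  have gsh : g s <= g (s + h) by apply: gmono => //; lra.
  have e1 : P (g (s + h) - y) <= P (a j).
    by apply: hPm; [exact: aj1|rewrite ea0; lra].
  have e2 : P (a j.+2) <= P (g s).
    by apply: hPm; [have := aj1 j.+1; rewrite ea1; lra|rewrite ea2; lra].
  lra.
- exact: hsum.
Qed.
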